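(* Let $\alpha>0$ and $0<\beta\le\frac14$, and consider the model $Y_i=f(x_i)+V^{1/2}(x_i)\xi_i$, $i=0,\dots,n$, $x_i=i/n$, with $\xi_0,\dots,\xi_n\overset{iid}{\sim}N(0,1)$. For every $\eta\in(0,1)$ there exists $c_\eta>0$ not depending on $n$ such that for all $0<c<c_\eta$, $$\inf_\varphi\left\{\sup_{f\in\mathcal{H}_\alpha,\,V\in\mathcal{V}_0}P_{f,V}\{\varphi=1\}+\sup_{f\in\mathcal{H}_\alpha,\,V\in\mathcal{V}_{1,\beta}(cn^{-\beta})}P_{f,V}\{\varphi=0\}\right\}\ge1-\eta,$$ where the infimum is over all tests $\varphi$, i.e. measurable functions of $(Y_0,\dots,Y_n)$ into $\{0,1\}$.
   Context: $\mathcal{H}_\alpha=\mathcal{H}_\alpha(M)$: functions $g:[0,1]\to\mathbb{R}$ with $|g^{(\lfloor\alpha\rfloor)}(x)-g^{(\lfloor\alpha\rfloor)}(y)|\le M|x-y|^{\alpha-\lfloor\alpha\rfloor}$ for all $x,y\in[0,1]$ and $\|g^{(k)}\|_\infty\le M$ for $k=0,\dots,\lfloor\alpha\rfloor$; $M$ is a fixed sufficiently large constant. $\mathcal{V}_0=\{V:[0,1]\to[0,\infty):V\equiv\sigma^2,\ 0\le\sigma^2\le M\}$; $\mathcal{V}_{1,\beta}(\varepsilon)=\{V\in\mathcal{H}_\beta:V\ge0,\ \|V-\bar V\mathbf 1\|_2\ge\varepsilon\}$ with $\bar V=\int_0^1V$, $\mathbf1\equiv1$, $\|\cdot\|_2$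 the $L^2([0,1])$ norm. $P_{f,V}$ is the law of the data. *)

(* Defs.v *)
From HB Require Import structures.
From mathcomp Require Import all_boot all_order all_algebra.
From mathcomp Require Import all_classical all_reals all_analysis.
Set Implicit Arguments. Unset Strict Implicit. Unset Printing Implicit Defensive.
Import Order.TTheory GRing.Theory Num.Theory.
Import numFieldNormedType.Exports.
Local Open Scope classical_set_scope.
Local Open Scope ring_scope.

Section Defs.
Variable R : realType.

Definition in01 (x : R) : Prop := 0 <= x <= 1.

Definition deriv_on01 (g g' : R -> R) : Prop :=
  forall x, in01 x -> forall e : R, 0 < e -> exists2 d : R, 0 < d &
    forall y, in01 y -> 0 < `|y - x| < d ->
      `|(g y - g x) / (y - x) - g' x| < e.

(* floor of alpha, as a natural number (alpha > 0 in the statement) *)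
Definition flo (a : R) : nat := `|Num.floor a|%N.

(* Hoelder class H_alpha(M) of functions on [0,1]:
   D k is the k-th derivative of g on [0,1], k = 0 .. floor(alpha) *)
Definition Hoelder (alpha M : R) (g : R -> R) : Prop :=
  exists D : nat -> R -> R,
    [/\ (forall x, in01 x -> D 0%N x = g x),
        (forall k, (k < flo alpha)%N -> deriv_on01 (D k) (D k.+1)),
        (forall k, (k <= flo alpha)%N -> forall x, in01 x -> `|D k x| <= M) &
        (forall x y, in01 x -> in01 y ->
           `|D (flo alpha) x - D (flo alpha) y|
             <= M * (`|x - y| `^ (alpha - (flo alpha)%:R)))].

Definition Vnull (M : R) (V : R -> R) : Prop :=
  exists2 s2 : R, 0 <= s2 <= M & forall x, in01 x -> V x = s2.

Definition int01 (h : R -> R) : R :=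
  fine (\int[lebesgue_measure]_(x in `[0%R, 1%R]) (h x)%:E)%E.

Definition L2norm01 (h : R -> R) : R := Num.sqrt (int01 (fun x => h x ^+ 2)).

Definition Valt (beta M eps : R) (V : R -> R) : Prop :=
  [/\ Hoelder beta M V, (forall x, in01 x -> 0 <= V x) &
      L2norm01 (fun x => V x - int01 V) >= eps].

(* Expectation of a nonnegative function h of xi = (xi_0,...,xi_{n-1})
   with xi_i iid N(0,1): iterated Lebesgue integral against the standard
   normal density (= integral w.r.t. the product measure, by Tonelli). *)
Fixpoint gauss_expect (n : nat) : (n.-tuple R -> \bar R) -> \bar R :=
  match n with
  | 0%N => fun h => h [tuple]
  | k.+1 => fun h =>
      (\int[lebesgue_measure]_x
         ((normal_pdf 0 1 x)%:E * gauss_expect (fun t => h (cons_tuple x t))))%E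
  end.

Definition obs (n : nat) (f V : R -> R) (xi : (n.+1).-tuple R) : (n.+1).-tuple R :=
  [tuple f (i%:R / n%:R) + Num.sqrt (V (i%:R / n%:R)) * tnth xi i | i < n.+1].

Definition Prob (n : nat) (f V : R -> R) (A : set ((n.+1).-tuple R)) : \bar R :=
  gauss_expect (fun xi => (\1_A (obs f V xi))%:E).

Definition is_test (n : nat) (phi : (n.+1).-tuple R -> bool) : Prop :=
  measurable_fun setT phi.

Definition minimax_risk (n : nat) (alpha beta M eps : R) : \bar R :=
  ereal_inf [set
    (ereal_sup [set @Prob n f V [set y | phi y] | f in Hoelder alpha M & V in Vnull M]
     + ereal_sup [set @Prob n f V [set y | ~~ phi y]
                    | f in Hoelder alpha M & V in Valt beta M eps])%E
   | phi in is_test (n:=n)].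

End Defs.

(* Main.v *)
Require Import Defs.
From HB Require Import structures.
From mathcomp Require Import all_boot all_order all_algebra.
From mathcomp Require Import all_classical all_reals all_analysis.
From mathcomp Require Import ring lra.
Import Order.TTheory GRing.Theory Num.Theory.
Import numFieldNormedType.Exports.
Local Open Scope classical_set_scope.
Local Open Scope ring_scope.

Section S.
Variable R : realType.

Lemma cont_of_der (f : R -> R) : (forall x, derivable f x 1) -> continuous f.
Proof.
move=> d x; apply: differentiable_continuous.
exact/derivable1_diffP.
Qed.

Lemma ftc01 (f F : R -> R) : (forall x, derivable f x 1) ->
  (forall x, derivable F x 1) -> (forall x, F^`()%classic x = f x) ->
  int01 f = F 1 - F 0.
Proof.
move=> df dF hF; rewrite /int01 (@continuous_FTC2 _ f F) //=.
- apply: continuous_subspaceT; exact: cont_of_der.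
- split.
  + by move=> x _.
  + by apply: cvg_at_right_filter; apply: cont_of_der.
  + by apply: cvg_at_left_filter; apply: cont_of_der.
Qed.

Lemma sin_natpi (i : nat) : sin (i%:R * pi) = 0 :> R.
Proof.
elim: i => [|i IH]; first by rewrite mul0r sin0.
by rewrite -natr1 mulrDl mul1r sinDpi IH oppr0.
Qed.

Lemma sin_lip (a b : R) : `|sin a - sin b| <= `|a - b|.
Proof.
wlog ab : a b / a <= b.
  move=> H; case/orP: (le_total a b) => [ab|ba]; first exact: H.
  rewrite distrC [`|a - b|]distrC; exact: H.
rewrite distrC; have [c _ ->] := @MVT_segment R sin cos a b ab (fun x _ => is_derive_sin x)
  (continuous_subspaceT (@continuous_sin R)).
rewrite normrM [`|a - b|]distrC -[X in _ <= X]mul1r ler_wpM2r //.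
by rewrite ler_norml cos_le1 cos_geN1.
Qed.

Definition Vb (A k : R) (x : R) := A * sin (k * x) ^+ 2.

Lemma int_Vb (A k : R) (n : nat) : k = n%:R * pi -> k != 0 ->
  int01 (Vb A k) = A / 2.
Proof.
move=> hk k0.
rewrite (@ftc01 _ (fun x => A * (x / 2 - sin (k * x) * cos (k * x) / (2 * k)))).
- rewrite mulr1 mulr0 sin0 {1}hk sin_natpi; field; rewrite ?k0 //.
- by move=> x; rewrite /Vb; apply: ex_derive.
- by move=> x; apply: ex_derive.
move=> x; rewrite derive1E derive_val /Vb.
rewrite /GRing.scale /=.
have hc := cos2sin2 (k * x).
set s := sin (k * x) in hc *; set c := cos (k * x) in hc *.
transitivity (A * (1 - (c^+2 - s^+2)) / 2).
  by field; rewrite k0.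
by rewrite hc; field.
Qed.

Lemma int_Vb2 (A k : R) (n : nat) : k = n%:R * pi -> k != 0 ->
  int01 (fun x => (Vb A k x - A / 2) ^+ 2) = A ^+ 2 / 8.
Proof.
move=> hk k0.
rewrite (@ftc01 _ (fun x => A ^+ 2 / 4 * (x / 2 +
   sin (k * x) * cos (k * x) * (cos (k * x) ^+ 2 - sin (k * x) ^+ 2) / (2 * k)))).
- rewrite mulr1 mulr0 sin0 {1}hk sin_natpi; field; rewrite ?k0 //.
- by move=> x; rewrite /Vb; apply: ex_derive.
- by move=> x; apply: ex_derive.
move=> x; rewrite derive1E derive_val /Vb.
rewrite /GRing.scale /=.
have hc := cos2sin2 (k * x).
set s := sin (k * x) in hc *; set c := cos (k * x) in hc *.
transitivity (A ^+ 2 / 4 * (1 / 2 + ((c ^+ 2 - s ^+ 2) ^+ 2 - 4 * s ^+ 2 * c ^+ 2) / 2)).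
  by field; rewrite k0.
by rewrite hc; field.
Qed.

Lemma gauss_const (n : nat) (h : n.-tuple R -> \bar R) (b : bool) :
  (forall t, h t = (b%:R)%:E) -> gauss_expect h = (b%:R)%:E.
Proof.
case: b; elim: n h => [|n IH] h hh /=; rewrite ?hh //.
- under eq_integral do rewrite (IH _ (fun t => hh _)) mule1.
  exact: integral_normal_pdf.
- under eq_integral do rewrite (IH _ (fun t => hh _)) mule0.
  by rewrite integral0.
Qed.

Lemma Hoelder0 (alpha M : R) : 0 <= M -> Hoelder alpha M (fun _ => 0).
Proof.
move=> M0; exists (fun _ _ => 0); split => //.
- move=> k _ x _ e e0; exists 1 => // y _ _.
  by rewrite subrr mul0r subr0 normr0.
- by move=> k _ x _; rewrite normr0.
- by move=> x y _ _; rewrite subrr normr0 mulr_ge0 // powR_ge0.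
Qed.

Lemma Prob_grid0 (n : nat) (V : R -> R) (A : set ((n.+1).-tuple R)) :
  (forall i : nat, V (i%:R / n%:R) = 0) ->
  Prob (fun _ => 0) V A =
  ((([tuple (0:R) | i < n.+1]) \in A)%:R)%:E.
Proof.
move=> hV; rewrite /Prob; apply: gauss_const => xi.
have -> : obs (fun _ => 0) V xi = [tuple (0:R) | i < n.+1].
  apply: eq_from_tnth => i; rewrite !tnth_mktuple hV sqrtr0 mul0r addr0.
  done.
by rewrite indicE.
Qed.

Lemma risk_ge1 (n : nat) (alpha beta M eps : R) (V1 : R -> R) :
  0 <= M -> Valt beta M eps V1 -> (forall i : nat, V1 (i%:R / n%:R) = 0) ->
  (1%:E <= minimax_risk n alpha beta M eps)%E.
Proof.
move=> M0 hV1 g1; apply: le_ereal_inf_tmp => y [phi _ <-].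
set y0 := [tuple (0:R) | i < n.+1].
have H1 : (((y0 \in [set y | phi y])%:R)%:E <=
   ereal_sup [set @Prob R n f V [set y | phi y] | f in Hoelder alpha M & V in Vnull M])%E.
  apply: ereal_sup_ubound; exists (fun _ => 0); first exact: Hoelder0.
  exists (fun _ => 0); first by exists 0 => //; rewrite lexx M0.
  by apply: Prob_grid0.
have H2 : (((y0 \in [set y | ~~ phi y])%:R)%:E <=
   ereal_sup [set @Prob R n f V [set y | ~~ phi y] | f in Hoelder alpha M & V in Valt beta M eps])%E.
  apply: ereal_sup_ubound; exists (fun _ => 0); first exact: Hoelder0.
  exists V1 => //.
  by apply: Prob_grid0.
apply: le_trans (leeD H1 H2).
case E: (phi y0).
  rewrite mem_set // memNset /= ?E // addr0 //.
rewrite memNset /= ?E // mem_set /= ?E // add0r //.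
Qed.

Lemma pow_min (t u b : R) : 0 <= t -> 0 < b <= 1 -> u <= 1 -> u <= t ->
  u <= t `^ b.
Proof.
move=> t0 /andP[b0 b1] u1 ut.
case: (lerP t 1) => t1.
  have [t00|tp] := eqVneq t 0.
    by rewrite t00 in ut; apply: le_trans ut _; rewrite powR_ge0.
  apply: le_trans ut _; apply: ger1_powR => //.
  by rewrite t1 andbT lt_neqAle eq_sym tp t0.
apply: le_trans u1 _.
rewrite -[X in X <= _](powRr0 t); apply: ler_powR => //; exact: ltW.
Qed.

Lemma sin_norm1 (a : R) : `|sin a| <= 1.
Proof. by rewrite ler_norml sin_le1 sin_geN1. Qed.

Lemma sin2_01 (a : R) : 0 <= sin a ^+ 2 <= 1.
Proof.
have := cos2Dsin2 a; rewrite sqr_ge0 /=.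
have := sqr_ge0 (cos a); lra.
Qed.

Lemma Vb_hoelder (A k b x y : R) : 0 <= A -> 0 <= k -> 0 < b <= 1 ->
  `|Vb A k x - Vb A k y| <= A * (2 * k * `|x - y|) `^ b.
Proof.
move=> A0 k0 hb; rewrite /Vb -mulrBr normrM (ger0_norm A0).
apply: ler_wpM2l => //; apply: pow_min => //.
- by rewrite mulr_ge0 // mulr_ge0.
- have := sin2_01 (k * x); have := sin2_01 (k * y).
  move=> /andP[h1 h2] /andP[h3 h4]; rewrite ler_norml; apply/andP; split; lra.
- rewrite subr_sqr normrM.
  have h1 : `|sin (k * x) - sin (k * y)| <= k * `|x - y|.
    by apply: le_trans (sin_lip _ _) _; rewrite -mulrBr normrM ger0_norm.
  have h2 : `|sin (k * x) + sin (k * y)| <= 2.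
    apply: le_trans (ler_normD _ _) _.
    have := sin_norm1 (k * x); have := sin_norm1 (k * y); lra.
  have -> : 2 * k * `|x - y| = k * `|x - y| * 2 by ring.
  by apply: ler_pM.
Qed.

Lemma Vb_ge0 (A k x : R) : 0 <= A -> 0 <= Vb A k x.
Proof. move=> A0; apply: mulr_ge0 => //; exact: sqr_ge0. Qed.

Lemma Vb_leA (A k x : R) : 0 <= A -> Vb A k x <= A.
Proof.
move=> A0; rewrite /Vb; have /andP[_ h] := sin2_01 (k * x).
by rewrite -[X in _ <= X]mulr1 ler_wpM2l.
Qed.

Lemma Vb_grid (A : R) (n i : nat) : (0 < n)%N ->
  Vb A (n%:R * pi) (i%:R / n%:R) = 0.
Proof.
move=> n0; rewrite /Vb.
have -> : n%:R * pi * (i%:R / n%:R) = i%:R * pi :> R.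
  by field; rewrite pnatr_eq0 -lt0n.
by rewrite sin_natpi expr0n mulr0.
Qed.

End S.

Theorem proposition3p3 (R : realType) (alpha beta : R) :
  0 < alpha -> 0 < beta <= 4^-1 ->
  exists M0 : R, forall M : R, M0 <= M ->
  forall eta : R, 0 < eta < 1 ->
  exists2 c_eta : R, 0 < c_eta &
  forall c : R, 0 < c < c_eta ->
  forall n : nat, (0 < n)%N ->
    ((1 - eta)%:E <= minimax_risk n alpha beta M (c * n%:R `^ (- beta)))%E.
Proof.
move=> ha /andP[hb0 hb1].
have hb : 0 < beta <= 1 by rewrite hb0 /=; lra.
exists (2 * pi) => M hM eta heta; exists (4^-1) => // c /andP[c0 c1] n n0.
set A := n%:R `^ (- beta).
pose k : R := n%:R * pi.
have np : 0 < n%:R :> R by rewrite ltr0n.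
have nb : 1 <= n%:R `^ beta :> R.
  rewrite -[X in X <= _](powRr0 n%:R); apply: ler_powR; last exact: ltW.
  by rewrite ler1n.
have hA : A = (n%:R `^ beta)^-1 by rewrite /A powRN.
have A0 : 0 < A by rewrite hA invr_gt0; lra.
have A1 : A <= 1 by rewrite hA invf_le1 //; lra.
have pi2 := pi_ge2 R.
have kp : 0 < k by rewrite /k mulr_gt0 //; lra.
have k0 : k != 0 by rewrite gt_eqF.
have M0 : 0 <= M by lra.
apply: (le_trans _ (@risk_ge1 R n alpha beta M _ (Vb R A k) M0 _ _)).
- by rewrite lee_fin; lra.
2: by move=> i; exact: Vb_grid.
have fl : flo beta = 0%N.
  rewrite /flo (@floor_def _ _ 0) //.
  by rewrite /= add0r ltW //=; lra.
split.
- exists (fun _ => Vb R A k); split => //.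
  + by move=> kk; rewrite fl.
  + move=> kk _ x _; rewrite ger0_norm; last exact/Vb_ge0/ltW.
    have := @Vb_leA R A k x (ltW A0); lra.
  + move=> x y _ _; rewrite fl subr0.
    apply: (@le_trans _ _ (A * (2 * k * `|x - y|) `^ beta)).
      exact: (@Vb_hoelder R A k beta x y (ltW A0) (ltW kp) hb).
    have -> : 2 * k * `|x - y| = (2 * pi) * (n%:R * `|x - y|) by rewrite /k; ring.
    rewrite (@powRM R (2 * pi) (n%:R * `|x - y|) beta); first last.
    - by apply: mulr_ge0 => //; exact: ltW.
    - by apply: mulr_ge0 => //; exact: pi_ge0.
    rewrite (@powRM R n%:R `|x - y| beta); first last.
    - by [].
    - exact: ltW.
    have -> : A * ((2 * pi) `^ beta * (n%:R `^ beta * `|x - y| `^ beta)) =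
      (2 * pi) `^ beta * `|x - y| `^ beta * (A * n%:R `^ beta) by ring.
    rewrite hA mulVf ?mulr1; last by apply: lt0r_neq0; lra.
    apply: ler_wpM2r; first exact: powR_ge0.
    apply: le_trans hM; apply: ler1_powR; first lra.
    by case/andP: hb.
- by move=> x _; apply/Vb_ge0/ltW.
- rewrite /L2norm01 (@int_Vb R A k n) //.
  rewrite (@int_Vb2 R A k n) //.
  have -> : c * A = `|c * A| by rewrite ger0_norm // mulr_ge0 ?ltW.
  rewrite -sqrtr_sqr ler_sqrt; last by rewrite mulr_ge0 ?sqr_ge0.
  have cA : c * A <= A / 4 by rewrite mulrC ler_pM2l //; lra.
  have : 0 <= c * A by rewrite mulr_ge0 ?ltW.
  nra.
Qed.
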